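(* Let the setting described in the context hold, and assume conditions (A)(i)–(iii) and (P), with $L_F^2\eta_k<1-\eta_F$ for all $k\ge1$. Assume $\lim_{\delta\to0^+}\lambda_k^\delta=\lambda_k^0$ for each $k$. Assume the stopping index $k(\delta)$ satisfies $\lim_{\delta\to0^+}k(\delta)=\infty$ and $\lim_{\delta\to0^+}\delta^2\sum_{i=1}^{k(\delta)}\eta_i=0$. Take the radius \[ \rho^2=e^{n\sum_{j=1}^{k(\delta)}c_j^\delta}\Big(\|x_1-x^\dagger\|^2+(C_{max}+\delta)^2+n\delta^2\sum_{j=1}^{k(\delta)}d_j\Big)-(C_{max}+\delta)^2, \] where \[ c_j^\delta=2\eta_j\lambda_j^\delta\max(1,L_G^2)\big(\tfrac32+2\eta_j\lambda_j^\delta L_G^2\big),\qquad d_j=\frac{(1+\eta_F)^2}{2(1-L_F^2\eta_j-\eta_F)}\eta_j . \] Then for every $k\le k(\delta)$, the data-driven SGD iterate $x_k^\delta$ lies in $\mathcal{B}_\rho(x^\dagger)$.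
   Context: Setting. $X,Y$ are real Hilbert spaces and $n\ge1$. $Y^n$ is the product Hilbert space. $F_i:\mathcal{D}(F_i)\subset X\to Y$ and $G_i:X\to Y$ for $i=1,\dots,n$, with $F(x)=n^{-1/2}(F_i(x))_i$ and $G(x)=n^{-1/2}(G_i(x))_i$. Data. The exact data are $y^\dagger=n^{-1/2}(y_i^\dagger)_i$ and the noisy data $y^\delta=n^{-1/2}(y_i^\delta)_i$, with $\|y^\delta-y^\dagger\|\le\delta$. Reference solution. $x_1$ is a deterministic initial guess, and $x^\dagger$ is the solution of $F(x)=y^\dagger$ of minimal distance to $x_1$. Algorithm. $x_1^\delta=x_1$, and \[ x_{k+1}^\delta=x_k^\delta-\eta_k\big(F_{i_k}'(x_k^\delta)^*(F_{i_k}(x_k^\delta)-y^\delta_{i_k})+\lambda_k^\delta G_{i_k}'(x_k^\delta)^*(G_{i_k}(x_k^\delta)-y^\delta_{i_k})\big), \] with $i_k$ drawn uniformly and independently from $\{1,\dots,n\}$, $\eta_k>0$ and $\lambda_k^\delta>0$. (A) On the closed ball $\mathcal{B}_\rho(x^\dagger)\subset\bigcap_i\mathcal{D}(F_i)$ the following hold. (i) $F_i$ and $G_i$ have continuous Fréchet derivatives bounded by $L_F$ and $L_G$. (ii) There is $\eta_F\in[0,1)$ with $\|F_i(x)-F_i(\tilde x)-F_i'(\tilde x)(x-\tilde x)\|\le\eta_F\|F_i(x)-F_i(\tilde x)\|$. (iii) $C_{min}\le\|G(x^* )-y^\dagger\|\le C_{max}$ for every solution $x^*\in\mathcal{B}_\rho(x^\dagger)$,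 with $0<C_{min}\le C_{max}$. (P) $L_F^2\eta_k<1$, $\sum_k\eta_k=\infty$, and $\sum_k\eta_k\lambda_k^\delta<\infty$. *)

(* Defs.v *)
From HB Require Import structures.
From mathcomp Require Import all_boot all_order all_algebra.
From mathcomp Require Import all_classical all_reals all_analysis.
Set Implicit Arguments. Unset Strict Implicit. Unset Printing Implicit Defensive.
Import Order.TTheory GRing.Theory Num.Theory.
Import numFieldNormedType.Exports.
Local Open Scope classical_set_scope.
Local Open Scope ring_scope.

(* ip is an inner product on V inducing the norm of V (so a complete V is a
   real Hilbert space). *)
Definition inner_product_of (R : realType) (V : normedModType R)
  (ip : V -> V -> R) : Prop :=
  [/\ (forall u v, ip u v = ip v u),
      (forall (a : R) u v w, ip (a *: u + v) w = a * ip u w + ip v w)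
    & (forall u, ip u u = `|u| ^+ 2)].

Definition is_adjoint (R : realType) (X Y : normedModType R)
  (ipX : X -> X -> R) (ipY : Y -> Y -> R) (L : X -> Y) (A : Y -> X) : Prop :=
  forall h y, ipY (L h) y = ipX h (A y).

Definition cball (R : realType) (X : normedModType R) (c : X) (rho : R) : set X :=
  [set x | `|x - c| <= rho].

Definition C1_bounded_on (R : realType) (X Y : normedModType R)
  (f : X -> Y) (B : set X) (L : R) : Prop :=
  [/\ (forall x, B x -> differentiable f x),
      (forall x, B x -> forall h, `|'d f x h| <= L * `|h|)
    & (forall x, B x -> forall e : R, 0 < e -> exists2 d : R, 0 < d &
          forall x', B x' -> `|x' - x| < d ->
            forall h, `|'d f x' h - 'd f x h| <= e * `|h|)].

Definition pnorm (R : realType) (Y : normedModType R) (n : nat)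
  (v : 'I_n -> Y) : R :=
  Num.sqrt ((n%:R)^-1 * \sum_(i < n) `|v i| ^+ 2).

(* The data-driven SGD iterates; sgd k = x_k for k >= 1 (sgd 0 = x_1 is junk).
   Fadj i x, Gadj i x are (the adjoints of) F_i'(x)^*, G_i'(x)^*. *)
Fixpoint sgd (R : realType) (X Y : normedModType R) (n : nat)
  (F G : 'I_n -> X -> Y) (Fadj Gadj : 'I_n -> X -> Y -> X)
  (yd : 'I_n -> Y) (eta lam : nat -> R) (ik : nat -> 'I_n) (x1 : X)
  (k : nat) : X :=
  match k with
  | 0 => x1
  | k'.+1 =>
    if k' == 0%N then x1 else
    let x := sgd F G Fadj Gadj yd eta lam ik x1 k' in
    let i := ik k' in
    x - eta k' *: (Fadj i x (F i x - yd i) + lam k' *: Gadj i x (G i x - yd i))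
  end.

Definition c_coef (R : realType) (eta lam : nat -> R) (LG : R) (j : nat) : R :=
  2 * eta j * lam j * Num.max 1 (LG ^+ 2) * (3 / 2 + 2 * eta j * lam j * LG ^+ 2).

Definition d_coef (R : realType) (eta : nat -> R) (LF etaF : R) (j : nat) : R :=
  (1 + etaF) ^+ 2 / (2 * (1 - LF ^+ 2 * eta j - etaF)) * eta j.

Definition rho_sq (R : realType) (n : nat) (eta lam : nat -> R)
  (LF LG etaF Cmax delta dist1 : R) (K : nat) : R :=
  expR (n%:R * \sum_(1 <= j < K.+1) c_coef eta lam LG j) *
    (dist1 ^+ 2 + (Cmax + delta) ^+ 2
       + n%:R * delta ^+ 2 * \sum_(1 <= j < K.+1) d_coef eta LF etaF j)
  - (Cmax + delta) ^+ 2.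

(* Main.v *)
Require Import Defs.
From HB Require Import structures.
From mathcomp Require Import all_boot all_order all_algebra.
From mathcomp Require Import all_classical all_reals all_analysis.
From mathcomp Require Import ring lra.
Import Order.TTheory GRing.Theory Num.Theory.
Import numFieldNormedType.Exports.
Local Open Scope classical_set_scope.
Local Open Scope ring_scope.
Set Implicit Arguments. Unset Strict Implicit. Unset Printing Implicit Defensive.
Section IP.
Variables (R : realType) (V : normedModType R) (ip : V -> V -> R).
Hypothesis H : inner_product_of ip.

Lemma ip_sym u v : ip u v = ip v u. Proof. by case: H. Qed.
Lemma ip_lin a u v w : ip (a *: u + v) w = a * ip u w + ip v w. Proof. by case: H. Qed.
Lemma ip_nn u : ip u u = `|u| ^+ 2. Proof. by case: H. Qed.
Lemma ip0l w : ip 0 w = 0.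
Proof. have := ip_lin 1 0 0 w; rewrite scaler0 addr0 mul1r => h; lra. Qed.
Lemma ipZl a u w : ip (a *: u) w = a * ip u w.
Proof. by have := ip_lin a u 0 w; rewrite addr0 ip0l addr0. Qed.
Lemma ipDl u v w : ip (u + v) w = ip u w + ip v w.
Proof. by have := ip_lin 1 u v w; rewrite scale1r mul1r. Qed.
Lemma ipNl u w : ip (- u) w = - ip u w.
Proof. by rewrite -scaleN1r ipZl mulN1r. Qed.
Lemma ipBl u v w : ip (u - v) w = ip u w - ip v w.
Proof. by rewrite ipDl ipNl. Qed.
Lemma ip0r w : ip w 0 = 0. Proof. by rewrite ip_sym ip0l. Qed.
Lemma ipZr a u w : ip w (a *: u) = a * ip w u.
Proof. by rewrite ip_sym ipZl ip_sym. Qed.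
Lemma ipDr u v w : ip w (u + v) = ip w u + ip w v.
Proof. by rewrite ip_sym ipDl !(ip_sym w). Qed.
Lemma ipBr u v w : ip w (u - v) = ip w u - ip w v.
Proof. by rewrite ip_sym ipBl !(ip_sym w). Qed.

Lemma ip_expand u w : `|u - w| ^+ 2 = `|u| ^+ 2 - 2 * ip u w + `|w| ^+ 2.
Proof. rewrite -!ip_nn ipBl !ipBr (ip_sym w u); ring. Qed.

Lemma ip_CS u v : `|ip u v| <= `|u| * `|v|.
Proof.
have [->|v0] := eqVneq v 0; first by rewrite ip0r !normr0 mulr0.
set p := ip u v.
have nv : 0 < `|v| by rewrite normr_gt0.
have := ip_expand u ((p / `|v| ^+ 2) *: v).
rewrite ipZr normrZ exprMn real_normK ?num_real // -/p => e.
have h0 : 0 <= `|u - (p / `|v| ^+ 2) *: v| ^+ 2 by rewrite exprn_ge0.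
have key : p ^+ 2 <= (`|u| * `|v|) ^+ 2.
  rewrite e in h0.
  have nv2 : 0 < `|v| ^+ 2 by rewrite exprn_gt0.
  have : 0 <= (`|u| ^+ 2 - 2 * (p / `|v| ^+ 2 * p) + (p / `|v| ^+ 2) ^+ 2 * `|v| ^+ 2) * `|v| ^+ 2.
    by rewrite mulr_ge0 // ltW.
  have -> : (`|u| ^+ 2 - 2 * (p / `|v| ^+ 2 * p) + (p / `|v| ^+ 2) ^+ 2 * `|v| ^+ 2) * `|v| ^+ 2
     = (`|u| * `|v|) ^+ 2 - p ^+ 2.
    by field; rewrite gt_eqF.
  by rewrite subr_ge0.
rewrite -ler_sqr ?nnegrE ?mulr_ge0 // real_normK ?num_real //.
Qed.

Lemma ip_le u v : ip u v <= `|u| * `|v|.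
Proof. exact: le_trans (ler_norm _) (ip_CS u v). Qed.
End IP.
Lemma ip_cvg (R : realType) (V : normedModType R) (ip : V -> V -> R)
  (H : inner_product_of ip) {T} {F : set_system T} {FF : Filter F}
  (q : T -> V) l v : q @ F --> l -> (fun s => ip (q s) v) @ F --> ip l v.
Proof.
move=> ql; apply/cvgrPdist_le => e e0.
have [->|v0] := eqVneq v 0.
  by near=> s; rewrite !(ip0r H) subrr normr0 ltW.
have nv : 0 < `|v| by rewrite normr_gt0.
move/cvgrPdist_le: ql => /(_ (e / `|v|)) /(_ (divr_gt0 e0 nv)).
apply: filterS => s hs.
rewrite -(ipBl H); apply: le_trans (ip_CS H _ _) _.
by rewrite -ler_pdivlMr.
Unshelve. all: by end_near.
Qed.

Lemma lip_ball (R : realType) (X Y : normedModType R) (ipY : Y -> Y -> R)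
  (HY : inner_product_of ipY) (G : X -> Y) (c x : X) (r L : R) :
  (forall z, `|z - c| <= r -> differentiable G z) ->
  (forall z, `|z - c| <= r -> forall h, `|'d G z h| <= L * `|h|) ->
  `|x - c| <= r -> `|G x - G c| <= L * `|x - c|.
Proof.
move=> dG bG xB.
set h := x - c; set p := fun t : R => t *: h + c.
set v := G x - G c; set psi := fun t => ipY (G (p t)) v.
have inB (t : R) : 0 <= t <= 1 -> `|p t - c| <= r.
  move=> /andP[t0 t1]; rewrite /p addrK normrZ ger0_norm //.
  by apply: le_trans xB; rewrite -[X in _ <= X]mul1r ler_wpM2r.
have der (t : R) : 0 <= t <= 1 -> is_derive t 1 psi (ipY ('d G (p t) h) v).
  move=> tI.
  have dGt : derivable G (p t) h by apply: diff_derivable; apply: dG; exact: inB.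
  have eq : (fun s : R => s^-1 *: ((psi \o shift t) (s *: 1) - psi t)) =
            (fun s => ipY (s^-1 *: ((G \o shift (p t)) (s *: h) - G (p t))) v).
    apply: funext => s /=; rewrite (ipZl HY) (ipBl HY) /psi /p.
    by rewrite /= [s *: 1]mulr1 scalerDl addrA.
  have cv : (fun s : R => s^-1 *: ((psi \o shift t) (s *: 1) - psi t)) @ 0^'
             --> ipY ('d G (p t) h) v.
    rewrite eq -(@deriveE _ _ _ G (p t) h); last exact: dG _ (inB t tI).
    exact: (ip_cvg HY dGt).
  split; first by apply/cvgP: cv.
  by rewrite /derive; apply: cvg_lim.
have [c0 c0I E] : exists2 c0, c0 \in `[0, 1]%R & psi 1 - psi 0 = ipY ('d G (p c0) h) v * (1 - 0).
  apply: MVT_segment => //.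
    by move=> t; rewrite in_itv /= => /andP[t0 t1]; apply: der; rewrite !ltW.
  apply: derivable_within_continuous => t; rewrite in_itv /= => tI.
  by have [] := der t tI.
move: E; rewrite subr0 mulr1 /psi /p scale1r scale0r add0r subrK -(ipBl HY) -/v (ip_nn HY).
have c0I' : 0 <= c0 <= 1 by move: c0I; rewrite in_itv.
have hb := bG _ (inB _ c0I') h.
have := ip_le HY ('d G (p c0) h) v => le1 E.
rewrite -E in le1.
have nv0 : 0 <= `|v| by [].
have [v0|vpos] := eqVneq `|v| 0.
  by rewrite v0; exact: le_trans (normr_ge0 _) hb.
have vp : 0 < `|v| by rewrite lt_def vpos.
have : `|v| ^+ 2 <= L * `|h| * `|v|.
  apply: le_trans le1 _; rewrite ler_wpM2r //.
rewrite expr2 ler_pM2r //.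
Qed.
Lemma realF (R : realType) (eta etaF LF rho N : R) :
  0 < eta -> 0 <= etaF -> LF ^+ 2 * eta < 1 - etaF -> 0 <= rho -> 0 <= N ->
  - 2 * eta * rho ^+ 2 + 2 * eta * (etaF * (rho + N) + N) * rho
    + 2 * eta ^+ 2 * LF ^+ 2 * rho ^+ 2
  <= (1 + etaF) ^+ 2 / (2 * (1 - LF ^+ 2 * eta - etaF)) * eta * N ^+ 2.
Proof.
move=> e0 f0 hL r0 N0.
set a := 1 - LF ^+ 2 * eta - etaF.
have a0 : 0 < a by rewrite /a; lra.
have -> : - 2 * eta * rho ^+ 2 + 2 * eta * (etaF * (rho + N) + N) * rho
    + 2 * eta ^+ 2 * LF ^+ 2 * rho ^+ 2 =
    - 2 * eta * a * rho ^+ 2 + 2 * eta * (1 + etaF) * N * rho by rewrite /a; ring.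
rewrite -subr_ge0.
have -> : (1 + etaF) ^+ 2 / (2 * a) * eta * N ^+ 2 -
    (- 2 * eta * a * rho ^+ 2 + 2 * eta * (1 + etaF) * N * rho)
  = eta / (2 * a) * (2 * a * rho - (1 + etaF) * N) ^+ 2.
  by field; rewrite gt_eqF.
apply: mulr_ge0; last exact: sqr_ge0.
by apply: divr_ge0; [exact: ltW | rewrite mulr_ge0 // ltW].
Qed.

Lemma realG (R : realType) (eta lam L l m n C t S : R) :
  0 < eta -> 0 < lam -> 0 <= L -> 1 <= l -> L ^+ 2 <= l -> 0 <= m -> m ^+ 2 = n ->
  1 <= n -> 0 <= C -> 0 <= t -> 0 <= S -> S <= L * t + m * C ->
  2 * eta * lam * L * t * S + 2 * eta ^+ 2 * lam ^+ 2 * L ^+ 2 * S ^+ 2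
  <= n * (2 * eta * lam * l * (3 / 2 + 2 * eta * lam * L ^+ 2)) * (t ^+ 2 + C ^+ 2).
Proof.
move=> e0 l0 L0 l1 Ll m0 mn n1 C0 t0 S0 SB.
have el : 0 < eta * lam by rewrite mulr_gt0.
set q := eta * lam.
have h1 : L * t * S <= 3 / 2 * L ^+ 2 * t ^+ 2 + n * C ^+ 2 / 2.
  have : L * t * S <= L * t * (L * t + m * C) by rewrite ler_wpM2l ?mulr_ge0.
  move=> h; apply: le_trans h _.
  have : 0 <= (L * t - m * C) ^+ 2 by exact: sqr_ge0.
  rewrite -mn; nra.
have h2 : S ^+ 2 <= 2 * (L ^+ 2 * t ^+ 2 + n * C ^+ 2).
  have hS : S ^+ 2 <= (L * t + m * C) ^+ 2 by nra.
  apply: le_trans hS _.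
  have : 0 <= (L * t - m * C) ^+ 2 by exact: sqr_ge0.
  rewrite -mn; nra.
have h3 : L ^+ 2 * t ^+ 2 <= l * n * t ^+ 2.
  rewrite ler_wpM2r ?exprn_ge0 //. nra.
have h4 : n * C ^+ 2 <= l * n * C ^+ 2.
  rewrite ler_wpM2r ?exprn_ge0 //. nra.
have L2 : 0 <= L ^+ 2 by rewrite exprn_ge0.
have t2 : 0 <= t ^+ 2 by rewrite exprn_ge0.
have C2 : 0 <= C ^+ 2 by rewrite exprn_ge0.
have -> : 2 * eta * lam * L * t * S = 2 * q * (L * t * S) by rewrite /q; ring.
have -> : 2 * eta ^+ 2 * lam ^+ 2 * L ^+ 2 * S ^+ 2 = 2 * q ^+ 2 * L ^+ 2 * S ^+ 2 by rewrite /q; ring.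
have -> : n * (2 * eta * lam * l * (3 / 2 + 2 * eta * lam * L ^+ 2)) * (t ^+ 2 + C ^+ 2)
   = 2 * q * (3 / 2 * (l * n * t ^+ 2 + l * n * C ^+ 2)) + 2 * q ^+ 2 * L ^+ 2 * (2 * (l * n * t ^+ 2 + l * n * C ^+ 2)) by rewrite /q; ring.
apply: lerD.
  rewrite ler_pM2l ?mulr_gt0 //; apply: le_trans h1 _.
  have nC : 0 <= n * C ^+ 2 by rewrite mulr_ge0 // (le_trans _ n1).
  have : n * C ^+ 2 / 2 <= 3 / 2 * (l * n * C ^+ 2) by lra.
  have : 3 / 2 * L ^+ 2 * t ^+ 2 <= 3 / 2 * (l * n * t ^+ 2) by lra.
  lra.
have q2 : 0 <= 2 * q ^+ 2 * L ^+ 2 by rewrite !mulr_ge0 // ?exprn_ge0 // ltW.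
rewrite ler_wpM2l //; apply: le_trans h2 _; lra.
Qed.
Lemma sq_adj (R : realType) (X Y : normedModType R) (ipX : X->X->R) (ipY : Y->Y->R)
  (HX : inner_product_of ipX) (HY : inner_product_of ipY) (A : X -> Y) (Aa : Y -> X) (LF : R) :
  (forall h y, ipY (A h) y = ipX h (Aa y)) -> (forall h, `|A h| <= LF * `|h|) ->
  forall r, `|Aa r| ^+ 2 <= LF ^+ 2 * `|r| ^+ 2.
Proof.
move=> adj bnd r.
have h : `|Aa r| ^+ 2 <= LF * `|Aa r| * `|r|.
  rewrite -(ip_nn HX) -adj; apply: le_trans (ip_le HY _ _) _.
  by rewrite ler_wpM2r.
set u := `|Aa r| in h *.
have u0 : 0 <= u by rewrite /u.
have [u00|upos] := eqVneq u 0.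
  by rewrite u00 expr0n /= mulr_ge0 ?sqr_ge0.
have up : 0 < u by rewrite lt_def upos.
have : u <= LF * `|r|.
  by rewrite -(ler_pM2r up); move: h; rewrite expr2 mulrAC.
have := normr_ge0 r; nra.
Qed.

Lemma vec_id (V : zmodType) (p q z : V) : (p - q + z) + (q - p) = z.
Proof. by rewrite addrAC subrKA subrr add0r. Qed.

Lemma step (R : realType) (X Y : normedModType R) (ipX : X->X->R) (ipY : Y->Y->R)
 (HX : inner_product_of ipX) (HY : inner_product_of ipY)
 (x xd : X) (Fx Fd Gx Gd yi ydi : Y) (A B : X -> Y) (Aa Ba : Y -> X)
 (eta lam LF L etaF l m n Cmax dl : R) :
 (forall h y, ipY (A h) y = ipX h (Aa y)) ->
 (forall h y, ipY (B h) y = ipX h (Ba y)) ->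
 (forall h, `|A h| <= LF * `|h|) ->
 (forall h, `|B h| <= L * `|h|) ->
 `|Fd - Fx - A (xd - x)| <= etaF * `|Fd - Fx| ->
 A (xd - x) = - A (x - xd) ->
 Fd = ydi ->
 `|Gx - Gd| <= L * `|x - xd| ->
 `|Gd - ydi| <= m * Cmax ->
 `|yi - ydi| <= m * dl ->
 `|yi - ydi| ^+ 2 <= n * dl ^+ 2 ->
 0 < eta -> 0 < lam -> 0 <= L -> 1 <= l -> L ^+ 2 <= l -> 0 <= m -> m ^+ 2 = n ->
 1 <= n -> 0 <= Cmax -> 0 <= dl -> 0 <= etaF -> LF ^+ 2 * eta < 1 - etaF ->
 `|x - eta *: (Aa (Fx - yi) + lam *: Ba (Gx - yi)) - xd| ^+ 2 <=
   `|x - xd| ^+ 2 + n * (2 * eta * lam * l * (3 / 2 + 2 * eta * lam * L ^+ 2))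
      * (`|x - xd| ^+ 2 + (Cmax + dl) ^+ 2)
   + n * dl ^+ 2 * ((1 + etaF) ^+ 2 / (2 * (1 - LF ^+ 2 * eta - etaF)) * eta).
Proof.
move=> adjA adjB bA bB cone Aneg Fd_eq lipG bGd bnu bnu2 e0 l0 L0 l1 Ll m0 mn n1 C0 d0 f0 hL.
set e := x - xd; set r := Fx - yi; set s := Gx - yi; set nu := yi - ydi.
set g := Aa r + lam *: Ba s.
have -> : x - eta *: g - xd = e - eta *: g by rewrite /e addrAC.
rewrite (ip_expand HX) (ipZr HX) normrZ gtr0_norm // (ipDr HX) (ipZr HX) -adjA -adjB.
have hAa := sq_adj HX HY adjA bA r.
have hBa := sq_adj HX HY adjB bB s.
have hg : `|g| <= `|Aa r| + lam * `|Ba s|.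
  by apply: le_trans (ler_normD _ _) _; rewrite normrZ gtr0_norm.
have hg2 : `|g| ^+ 2 <= 2 * `|Aa r| ^+ 2 + 2 * lam ^+ 2 * `|Ba s| ^+ 2.
  have h1 : `|g| ^+ 2 <= (`|Aa r| + lam * `|Ba s|) ^+ 2.
    have := normr_ge0 g; nra.
  apply: le_trans h1 _.
  have := sqr_ge0 (`|Aa r| - lam * `|Ba s|); nra.
set w := Fd - Fx - A (xd - x).
have rnu : r + nu = Fx - ydi by rewrite /r /nu addrA subrK.
have AeE : A e = w + (r + nu) by rewrite /w Aneg rnu Fd_eq opprK vec_id.
have hw : `|w| <= etaF * (`|r| + `|nu|).
  apply: le_trans cone _; rewrite ler_wpM2l //.
  by rewrite Fd_eq -opprB normrN -rnu ler_normD.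
have I1 : `|r| ^+ 2 - (etaF * (`|r| + `|nu|) + `|nu|) * `|r| <= ipY (A e) r.
  rewrite AeE (ipDl HY) (ipDl HY) (ip_nn HY).
  have := ip_le HY (- w) r; rewrite (ipNl HY) normrN => h1.
  have := ip_le HY (- nu) r; rewrite (ipNl HY) normrN => h2.
  have : `|w| * `|r| <= etaF * (`|r| + `|nu|) * `|r| by rewrite ler_wpM2r.
  lra.
have hs : `|s| <= L * `|e| + m * (Cmax + dl).
  have -> : s = (Gx - Gd) + ((Gd - ydi) - nu) by rewrite /s /nu opprB !subrKA.
  apply: le_trans (ler_normD _ _) _; rewrite lerD //.
  apply: le_trans (ler_normB _ _) _; rewrite mulrDr lerD //.
have I2 : - (L * `|e| * `|s|) <= ipY (B e) s.
  have := ip_le HY (- B e) s; rewrite (ipNl HY) normrN => h1.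
  have : `|B e| * `|s| <= L * `|e| * `|s| by rewrite ler_wpM2r.
  lra.
have RF := realF e0 f0 hL (normr_ge0 r) (normr_ge0 nu).
have RG := realG e0 l0 L0 l1 Ll m0 mn n1 (addr_ge0 C0 d0) (normr_ge0 e) (normr_ge0 s) hs.
set d' := (1 + etaF) ^+ 2 / (2 * (1 - LF ^+ 2 * eta - etaF)) * eta in RF *.
have d'0 : 0 <= d'.
  apply: mulr_ge0; last exact: ltW.
  apply: divr_ge0; first exact: sqr_ge0.
  apply: mulr_ge0 => //; lra.
have RN : d' * `|nu| ^+ 2 <= n * dl ^+ 2 * d'.
  by rewrite mulrC ler_wpM2r.
have J1 : eta * (`|r| ^+ 2 - (etaF * (`|r| + `|nu|) + `|nu|) * `|r|) <= eta * ipY (A e) r.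
  by rewrite ler_wpM2l // ltW.
have J2 : eta * lam * (- (L * `|e| * `|s|)) <= eta * lam * ipY (B e) s.
  by rewrite ler_wpM2l // ltW // mulr_gt0.
have J3 : eta ^+ 2 * `|g| ^+ 2 <= eta ^+ 2 * (2 * (LF ^+ 2 * `|r| ^+ 2) + 2 * lam ^+ 2 * (L ^+ 2 * `|s| ^+ 2)).
  rewrite ler_wpM2l ?sqr_ge0 //; apply: le_trans hg2 _.
  have : 0 <= lam ^+ 2 by exact: sqr_ge0.
  nra.
lra.
Qed.
Lemma pnorm_le (R : realType) (Y : normedModType R) n (v : 'I_n -> Y) (c : R) i :
  0 <= c -> pnorm v <= c -> `|v i| ^+ 2 <= n%:R * c ^+ 2.
Proof.
move=> c0; rewrite /pnorm -[c in _ <= c]ger0_norm // -sqrtr_sqr ler_sqrt ?sqr_ge0 // => h.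
have n0 : (0 < n)%N := leq_ltn_trans (leq0n i) (ltn_ord i).
have np : 0 < n%:R :> R by rewrite ltr0n.
have := ler_wpM2l (ltW np) h; rewrite mulrA mulfV ?gt_eqF // mul1r => hs.
apply: le_trans hs; rewrite (bigD1 i) //= lerDl sumr_ge0 // => j _.
Qed.

Lemma pnorm_le1 (R : realType) (Y : normedModType R) n (v : 'I_n -> Y) (c : R) i :
  0 <= c -> pnorm v <= c -> `|v i| <= Num.sqrt n%:R * c.
Proof.
move=> c0 h; have h2 := pnorm_le i c0 h.
have s0 := sqrtr_ge0 (n%:R : R).
have sq : Num.sqrt (n%:R : R) ^+ 2 = n%:R by rewrite sqr_sqrtr // ler0n.
by rewrite -ler_sqr ?nnegrE ?mulr_ge0 // exprMn sq.
Qed.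

Theorem corollary3p2 (R : realType) (X Y : completeNormedModType R)
  (ipX : X -> X -> R) (ipY : Y -> Y -> R) (n : nat)
  (D : 'I_n -> set X) (F G : 'I_n -> X -> Y)
  (Fadj Gadj : 'I_n -> X -> Y -> X)
  (ydag : 'I_n -> Y) (ydelta : R -> 'I_n -> Y)
  (x1 xdag : X) (eta : nat -> R) (lam : R -> nat -> R) (kstop : R -> nat)
  (ik : nat -> 'I_n) (LF LG etaF Cmin Cmax delta : R) :
  (0 < n)%N ->
  inner_product_of ipX -> inner_product_of ipY ->
  (* noisy data *)
  (forall d, 0 < d -> pnorm (fun i => ydelta d i - ydag i) <= d) ->
  (* x^dagger : solution of F(x) = y^dagger of minimal distance to x_1 *)
  ((forall i, D i xdag) /\ (forall i, F i xdag = ydag i)) ->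
  (forall x, (forall i, D i x) -> (forall i, F i x = ydag i) ->
     `|xdag - x1| <= `|x - x1|) ->
  0 < delta ->
  let rho := Num.sqrt (rho_sq n eta (lam delta) LF LG etaF Cmax delta
                         `|x1 - xdag| (kstop delta)) in
  let B := cball xdag rho in
  (* (A) on the closed ball B_rho(x^dagger) *)
  (forall i, B `<=` D i) ->
  (forall i, C1_bounded_on (F i) B LF) ->
  (forall i, C1_bounded_on (G i) B LG) ->
  (forall i x, B x -> is_adjoint ipX ipY ('d (F i) x) (Fadj i x)) ->
  (forall i x, B x -> is_adjoint ipX ipY ('d (G i) x) (Gadj i x)) ->
  0 <= etaF < 1 ->
  (forall i x xt, B x -> B xt ->
     `|F i x - F i xt - 'd (F i) xt (x - xt)| <= etaF * `|F i x - F i xt|) ->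
  0 < Cmin -> Cmin <= Cmax ->
  (forall xs, B xs -> (forall i, D i xs) -> (forall i, F i xs = ydag i) ->
     Cmin <= pnorm (fun i => G i xs - ydag i) <= Cmax) ->
  (* (P) and step-size assumptions *)
  (forall k, (1 <= k)%N -> 0 < eta k) ->
  (forall d, 0 < d -> forall k, (1 <= k)%N -> 0 < lam d k) ->
  (forall k, (1 <= k)%N -> LF ^+ 2 * eta k < 1) ->
  (forall k, (1 <= k)%N -> LF ^+ 2 * eta k < 1 - etaF) ->
  (fun N => \sum_(1 <= k < N) eta k) @ \oo --> +oo ->
  (forall d, 0 < d -> cvg ((fun N => \sum_(1 <= k < N) eta k * lam d k) @ \oo)) ->
  (* behaviour as delta -> 0+ *)
  (forall k, (1 <= k)%N -> (fun d => lam d k) @ 0^'+ --> lam 0 k) ->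
  (forall N, \forall d \near 0^'+, (N <= kstop d)%N) ->
  (fun d => d ^+ 2 * \sum_(1 <= i < (kstop d).+1) eta i) @ 0^'+ --> 0 ->
  (* conclusion, for every realisation of the random indices i_k *)
  forall k, (1 <= k)%N -> (k <= kstop delta)%N ->
    B (sgd F G Fadj Gadj (ydelta delta) eta (lam delta) ik x1 k).
Proof.
move=> n0 HX HY noisy [Dxd Fxd] _ d0 rho B BD C1F C1G adjF adjG /andP[f0 f1] cone
  Cmin0 CminCmax Ciii eta0 lam0 _ hL _ _ _ _ _ k k1 kK.
set K := kstop delta; set lamd := lam delta; set yd := ydelta delta.
set C := Cmax + delta; set L := `|LG|.
set xs := sgd F G Fadj Gadj yd eta lamd ik x1.
set cc := c_coef eta lamd LG; set dd := d_coef eta LF etaF.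
set nR := (n%:R : R).
have n1 : 1 <= nR by rewrite /nR ler1n.
have C0 : 0 <= Cmax by apply: le_trans CminCmax; exact: ltW.
set A0 := `|x1 - xdag| ^+ 2 + C ^+ 2.
set Q := fun j => expR (nR * \sum_(1 <= i < j) cc i) * (A0 + nR * delta ^+ 2 * \sum_(1 <= i < j) dd i).
have lmax1 : 1 <= Num.max 1 (LG ^+ 2) by rewrite le_max lexx.
have lmax2 : LG ^+ 2 <= Num.max 1 (LG ^+ 2) by rewrite le_max lexx orbT.
have cc0 i : (1 <= i)%N -> 0 <= cc i.
  move=> i1; have := eta0 _ i1; have := lam0 _ d0 _ i1 => l0 e0.
  have p1 : 0 <= 2 * eta i * lamd i by rewrite !mulr_ge0 // ltW.
  have p2 : 0 <= 2 * eta i * lamd i * LG ^+ 2 by rewrite mulr_ge0 // sqr_ge0.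
  rewrite /cc /c_coef; apply: mulr_ge0; last by lra.
  by rewrite mulr_ge0 // (le_trans ler01).
have dd0 i : (1 <= i)%N -> 0 <= dd i.
  move=> i1; have := eta0 _ i1; have := hL _ i1 => h e0.
  rewrite /dd /d_coef; apply: mulr_ge0; last exact: ltW.
  apply: divr_ge0; first exact: sqr_ge0.
  apply: mulr_ge0 => //; lra.
have Sc0 j : 0 <= \sum_(1 <= i < j) cc i.
  by rewrite big_nat_cond sumr_ge0 // => i /andP[/andP[i1 _] _]; apply: cc0.
have Sd0 j : 0 <= \sum_(1 <= i < j) dd i.
  by rewrite big_nat_cond sumr_ge0 // => i /andP[/andP[i1 _] _]; apply: dd0.
have A00 : 0 <= A0 by rewrite addr_ge0 ?sqr_ge0.
have inner0 j : 0 <= A0 + nR * delta ^+ 2 * \sum_(1 <= i < j) dd i.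
  apply: addr_ge0 => //; apply: mulr_ge0; last exact: Sd0.
  by apply: mulr_ge0; [exact: le_trans ler01 n1 | exact: sqr_ge0].
have Qstep j : (1 <= j)%N -> Q j.+1 = expR (nR * cc j) * expR (nR * \sum_(1 <= i < j) cc i) *
      (A0 + nR * delta ^+ 2 * \sum_(1 <= i < j) dd i + nR * delta ^+ 2 * dd j).
  move=> j1; rewrite /Q !big_nat_recr //= [nR * (_ + cc j)]mulrDr expRD; ring.
have Qmono1 j : (1 <= j)%N -> Q j <= Q j.+1.
  move=> j1; rewrite Qstep // /Q.
  have e1 : 1 <= expR (nR * cc j).
    apply: le_trans _ (expR_ge1Dx _); rewrite lerDl; apply: mulr_ge0; last exact: cc0.
    exact: le_trans ler01 n1.
  have b0 := expR_ge0 (nR * \sum_(1 <= i < j) cc i).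
  have u0 := inner0 j.
  have w0 : 0 <= nR * delta ^+ 2 * dd j.
    apply: mulr_ge0; last exact: dd0.
    by apply: mulr_ge0; [exact: le_trans ler01 n1 | exact: sqr_ge0].
  move: e1 b0 u0 w0.
  move: (expR (nR * cc j)) (expR (nR * \sum_(1 <= i < j) cc i))
    (A0 + nR * delta ^+ 2 * \sum_(1 <= i < j) dd i) (nR * delta ^+ 2 * dd j) => a b u w a1 b0 u0 w0.
  have h1 : 0 <= (a - 1) * b * u by rewrite !mulr_ge0 // subr_ge0.
  have h2 : 0 <= a * b * w by rewrite !mulr_ge0 // (le_trans ler01).
  lra.
have Qmono j j' : (1 <= j)%N -> (j <= j')%N -> Q j <= Q j'.
  move=> j1; elim: j' => [|j' IH]; first by rewrite leqn0 => /eqP jz; move: j1; rewrite jz.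
  rewrite leq_eqVlt => /orP[/eqP -> //|]; rewrite ltnS => jj.
  apply: le_trans (IH jj) (Qmono1 _ _); exact: leq_trans j1 jj.
have rhoE : rho_sq n eta lamd LF LG etaF Cmax delta `|x1 - xdag| K = Q K.+1 - C ^+ 2.
  by [].
have toB j : (1 <= j)%N -> (j <= K)%N -> `|xs j - xdag| ^+ 2 + C ^+ 2 <= Q j -> B (xs j).
  move=> j1 jK h; rewrite /B /cball /= /rho -/lamd -/K.
  have hq : `|xs j - xdag| ^+ 2 <= rho_sq n eta lamd LF LG etaF Cmax delta `|x1 - xdag| K.
    rewrite rhoE; have := Qmono j K.+1 j1 (leqW jK); lra.
  rewrite -[X in X <= _]ger0_norm // -sqrtr_sqr ler_sqrt //.
  exact: le_trans (sqr_ge0 _) hq.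
suff main : forall j, (1 <= j)%N -> (j <= K)%N -> `|xs j - xdag| ^+ 2 + C ^+ 2 <= Q j.
  exact: toB k k1 kK (main k k1 kK).
elim=> [//|j IH] j1 jK.
case: (posnP j) => [jz|jpos].
  rewrite jz /Q !big_geq // !mulr0 expR0 mul1r addr0.
  by have -> : xs 1%N = x1 by [].
have jK' : (j <= K)%N := ltnW jK.
have IHj := IH jpos jK'.
have Bx := toB j jpos jK' IHj.
set i := ik j; set x := xs j.
have jn : (j == 0%N) = false by rewrite eqn0Ngt jpos.
have -> : xs j.+1 = x - eta j *: (Fadj i x (F i x - yd i) + lamd j *: Gadj i x (G i x - yd i)).
  by rewrite /xs /= jn.
have Bxd : B xdag by rewrite /B /cball /= subrr normr0 sqrtr_ge0.
have [_ bA _] := C1F i.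
have [dGi bG _] := C1G i.
have L0 : 0 <= L := normr_ge0 LG.
have bB : forall z, B z -> forall h, `|'d (G i) z h| <= L * `|h|.
  by move=> z Bz h; apply: le_trans (bG z Bz h) _; rewrite ler_wpM2r // ler_norm.
have lipG : `|G i x - G i xdag| <= L * `|x - xdag|.
  exact: (lip_ball HY (fun z hz => dGi z hz) (fun z hz => bB z hz) Bx).
have [_ Cup] := andP (Ciii xdag Bxd Dxd Fxd).
have bGd : `|G i xdag - ydag i| <= Num.sqrt nR * Cmax := pnorm_le1 i C0 Cup.
have nz := noisy delta d0.
have bnu : `|yd i - ydag i| <= Num.sqrt nR * delta := pnorm_le1 i (ltW d0) nz.
have bnu2 : `|yd i - ydag i| ^+ 2 <= nR * delta ^+ 2 := pnorm_le i (ltW d0) nz.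
have L2 : L ^+ 2 <= Num.max 1 (LG ^+ 2) by rewrite /L real_normK ?num_real.
have Aneg : 'd (F i) x (xdag - x) = - 'd (F i) x (x - xdag) by rewrite -linearN opprB.
have sq : Num.sqrt nR ^+ 2 = nR by rewrite sqr_sqrtr // ler0n.
have S := step HX HY (adjF i x Bx) (adjG i x Bx) (bA x Bx) (bB x Bx)
  (cone i xdag x Bxd Bx) Aneg (Fxd i) lipG bGd bnu bnu2 (eta0 j jpos) (lam0 delta d0 j jpos)
  L0 lmax1 L2 (sqrtr_ge0 _) sq n1 C0 (ltW d0) f0 (hL j jpos).
rewrite /L (real_normK (num_real LG)) in S.
have ccE : cc j = 2 * eta j * lamd j * Num.max 1 (LG ^+ 2) * (3 / 2 + 2 * eta j * lamd j * LG ^+ 2) by [].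
have ddE : dd j = (1 + etaF) ^+ 2 / (2 * (1 - LF ^+ 2 * eta j - etaF)) * eta j by [].
rewrite -ccE -ddE -/C in S.
rewrite Qstep //.
have Qj : Q j = expR (nR * \sum_(1 <= i < j) cc i) * (A0 + nR * delta ^+ 2 * \sum_(1 <= i < j) dd i) by [].
rewrite Qj in IHj.
have e1 : 1 + nR * cc j <= expR (nR * cc j) := expR_ge1Dx _.
have nc0 : 0 <= nR * cc j by rewrite mulr_ge0 ?cc0 // (le_trans ler01).
have b1 : 1 <= expR (nR * \sum_(1 <= i < j) cc i).
  apply: le_trans _ (expR_ge1Dx _); rewrite lerDl mulr_ge0 //; exact: le_trans ler01 n1.
have u0 := inner0 j.
have w0 : 0 <= nR * delta ^+ 2 * dd j.
  apply: mulr_ge0; last exact: dd0.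
  by apply: mulr_ge0; [exact: le_trans ler01 n1 | exact: sqr_ge0].
move: S IHj e1 nc0 b1 u0 w0.
move: (`|_ - xdag| ^+ 2) (`|x - xdag| ^+ 2) (nR * cc j) (expR (nR * cc j))
  (expR (nR * \sum_(1 <= i < j) cc i))
  (A0 + nR * delta ^+ 2 * \sum_(1 <= i < j) dd i) (nR * delta ^+ 2 * dd j)
  => E' E c a b u w S IHj e1 nc0 b1 u0 w0.
have h1 : (1 + c) * (E + C ^+ 2) <= (1 + c) * (b * u) by rewrite ler_wpM2l // addr_ge0.
have h2 : 0 <= (a - (1 + c)) * (b * u).
  apply: mulr_ge0; first by lra.
  by apply: mulr_ge0 => //; exact: le_trans ler01 b1.
have a1 : 1 <= a by apply: le_trans _ e1; rewrite lerDl.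
have ab1 : 1 <= a * b by rewrite -[1]mulr1 ler_pM.
have h3 : 0 <= (a * b - 1) * w by rewrite mulr_ge0 // subr_ge0.
lra.
Qed.
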